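(* Let $G$ be a permutation graph or a near-permutation graph on $n$ vertices whose odd girth equals $\frac{n}{2}$. If $G$ is not $3$-edge-colourable, then $G$ is isomorphic to the Petersen graph or to the Petersen graph minus one edge.
   Context: All graphs are finite and simple. A cubic graph $G$ on $n$ vertices is a permutation graph if $G$ has a perfect matching $M$ such that $G-M$ (deleting the edges of $M$) is the disjoint union of two chordless cycles $A$ and $B$, each of length $\frac{n}{2}$. A near-permutation graph is a graph obtained from such a permutation graph by deleting one edge of the perfect matching $M$. The odd girth of a graph is the length of a shortest odd cycle. A graph is $3$-edge-colourable if it admits a proper edge-colouring with $3$ colours. *)

(* Defs.v *)
From mathcomp Require Import all_boot.
Set Implicit Arguments. Unset Strict Implicit. Unset Printing Implicit Defensive.

Section Graphs.
Variable T : finType.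

Definition simple_graph (e : rel T) : Prop := symmetric e /\ irreflexive e.

Definition cubic (e : rel T) : Prop := forall x : T, #|[set y | e x y]| = 3.

Definition perfect_matching (e m : rel T) : Prop :=
  [/\ symmetric m, (forall x y, m x y -> e x y) & forall x : T, #|[set y | m x y]| = 1].

Definition cyc_adj (c : seq T) (x y : T) : bool :=
  [&& x \in c, y \in c & (next c x == y) || (next c y == x)].

(* e with matching m, and A, B witnessing that e - m is the disjoint union of the
   two (chordless) cycles A and B, each of length n/2 where n = #|T| *)
Definition perm_structure (e m : rel T) (A B : seq T) : Prop :=
  [/\ simple_graph e, cubic e, perfect_matching e m &
      [/\ uniq A, uniq B, 3 <= size A, size A = #|T| %/ 2 & size B = #|T| %/ 2] /\
      (forall x : T, (x \in A) != (x \in B)) /\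
      (forall x y : T, (e x y && ~~ m x y) = cyc_adj A x y || cyc_adj B x y)].

Definition permutation_graph (e : rel T) : Prop :=
  exists (m : rel T) (A B : seq T), perm_structure e m A B.

Definition near_permutation_graph (e : rel T) : Prop :=
  exists (e0 m : rel T) (A B : seq T) (u v : T),
    [/\ perm_structure e0 m A B, m u v &
        forall x y : T,
          e x y = e0 x y && ~~ (((x == u) && (y == v)) || ((x == v) && (y == u)))].

Definition is_cycle_of (e : rel T) (c : seq T) : bool :=
  [&& uniq c, 3 <= size c & cycle e c].

Definition odd_girth (e : rel T) (k : nat) : Prop :=
  (exists c, is_cycle_of e c /\ odd (size c) /\ size c = k) /\
  (forall c, is_cycle_of e c -> odd (size c) -> k <= size c).

Definition three_edge_colourable (e : rel T) : Prop :=
  exists col : T -> T -> 'I_3,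
    (forall x y, e x y -> col x y = col y x) /\
    (forall x y z, e x y -> e x z -> y != z -> col x y != col x z).

End Graphs.

Definition graph_iso (T U : finType) (e : rel T) (f : rel U) : Prop :=
  exists g : T -> U, bijective g /\ forall x y, f (g x) (g y) = e x y.

(* Petersen graph on 'I_10: outer 5-cycle 0..4, spokes i -- i+5,
   inner pentagram 5-7-9-6-8-5 *)
Definition petersen_edges : seq (nat * nat) :=
  [:: (0,1); (1,2); (2,3); (3,4); (4,0);
      (0,5); (1,6); (2,7); (3,8); (4,9);
      (5,7); (7,9); (9,6); (6,8); (8,5)].

Definition petersen : rel 'I_10 :=
  fun x y => ((nat_of_ord x, nat_of_ord y) \in petersen_edges)
          || ((nat_of_ord y, nat_of_ord x) \in petersen_edges).

Definition petersen_minus (u v : 'I_10) : rel 'I_10 :=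
  fun x y => petersen x y && ~~ (((x == u) && (y == v)) || ((x == v) && (y == u))).

(* Main.v *)
Require Import Defs.
From mathcomp Require Import all_boot.
From Stdlib Require Import Lia.
Set Implicit Arguments. Unset Strict Implicit. Unset Printing Implicit Defensive.


Section Gen.
Variable T : eqType.

Lemma index_next (H : seq T) x : uniq H -> x \in H ->
  index (next H x) H = (index x H).+1 %% size H.
Proof.
case: H => [//|y0 p] U xH.
rewrite next_nth xH.
have hi : index x (y0 :: p) < size (y0 :: p) by rewrite index_mem.
have [lt|ge] := ltnP (index x (y0 :: p)) (size p).
  have -> : nth y0 p (index x (y0 :: p)) = nth y0 (y0 :: p) (index x (y0::p)).+1 by [].
  rewrite index_uniq //= ?modn_small //.
rewrite nth_default //.
have e1 : index x (y0 :: p) = size p by apply/eqP; rewrite eqn_leq ge andbT -ltnS.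
by rewrite e1 /= eqxx modnn.
Qed.

End Gen.


Lemma odd_succ_mod N k : ~~ odd N -> k < N -> odd (k.+1 %% N) = ~~ odd k.
Proof.
move=> eN lt; have [lt1|ge1] := ltnP k.+1 N; first by rewrite modn_small.
have eq : k.+1 = N by apply/eqP; rewrite eqn_leq lt ge1.
by rewrite eq modnn /=; move: eN; rewrite -eq /= negbK => ->.
Qed.

Lemma no2 k N : 2 < N -> (k.+2 == k %[mod N]) = false.
Proof. by move=> h; rewrite -addn2 -{2}[k]addn0 eqn_modDl mod0n modn_small. Qed.

Section Ham.
Variable T : finType.
Variable e : rel T.
Hypothesis esym : symmetric e.
Hypothesis deg3 : forall x, #|[set y | e x y]| <= 3.
Variable H : seq T.
Hypothesis UH : uniq H.
Hypothesis allH : forall x, x \in H.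
Hypothesis cH : cycle e H.
Hypothesis evH : ~~ odd (size H).
Hypothesis sz3 : 3 <= size H.

Let N := size H.
Let idx x := index x H.
Let nx x := next H x.

Lemma idx_lt x : idx x < N.
Proof. by rewrite /idx /N index_mem. Qed.

Lemma idx_inj x y : idx x = idx y -> x = y.
Proof. by move=> E; rewrite -(nth_index x (allH x)) -(nth_index x (allH y)) -/(idx x) E. Qed.

Lemma idx_nx x : idx (nx x) = (idx x).+1 %% N.
Proof. exact: index_next. Qed.

Lemma nnx x : nx (nx x) != x.
Proof.
apply/negP=> /eqP E.
have : idx (nx (nx x)) = idx x by rewrite E.
rewrite !idx_nx.
rewrite -addn1 modnDml addn1 -(modn_small (idx_lt x)) => /eqP.
by rewrite -addn2 modnDml addn2 no2.
Qed.

Definition colnat x y : nat :=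
  if y == nx x then nat_of_bool (odd (idx x)) else if x == nx y then nat_of_bool (odd (idx y)) else 2.

Lemma colnat_lt x y : colnat x y < 3.
Proof. by rewrite /colnat; case: ifP => _; [|case: ifP] => //; case: odd. Qed.

Lemma ham_colour : three_edge_colourable e.
Proof.
exists (fun x y => inord (colnat x y)); split.
  move=> x y _; congr inord; rewrite /colnat.
  case Ey: (y == nx x); case Ex: (x == nx y) => //.
  by move: (nnx x); rewrite -(eqP Ey) -(eqP Ex) eqxx.
move=> x y z exy exz nyz.
apply/negP=> /eqP /(congr1 (@nat_of_ord 3)); rewrite !inordK ?colnat_lt // => E.
have oddN : forall w, odd (idx (nx w)) = ~~ odd (idx w).
  by move=> w; rewrite idx_nx odd_succ_mod // idx_lt.
move: E; rewrite /colnat.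
case: (y =P nx x) => [Ey|ny]; case: (z =P nx x) => [Ez|nz].
- by move: nyz; rewrite Ey Ez eqxx.
- case: (x =P nx z) => [Ex|nx'].
    by rewrite Ex oddN; case: odd.
  by case: odd.
- case: (x =P nx y) => [Ex|nx'].
    by rewrite {1}Ex oddN; case: odd.
  by case: odd.
case: (x =P nx y) => [Ex|nxy]; case: (x =P nx z) => [Ex'|nxz].
- move=> _; move: nyz; rewrite (can_inj (prev_next UH) (etrans (Logic.eq_sym Ex) Ex')).
  by rewrite eqxx.
- by case: odd.
- by case: odd.
move=> _.
(* degree contradiction *)
set S := [set w | e x w].
have p1 : e x (nx x) by apply: next_cycle cH (allH x).
have p2 : e x (prev H x) by rewrite esym; apply: prev_cycle cH (allH x).
have npx : forall w, (w == prev H x) = (x == nx w).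
  move=> w; apply/eqP/eqP => [->|->]; first by rewrite /nx next_prev.
  by rewrite /nx prev_next.
have U : uniq [:: nx x; prev H x; y; z].
  rewrite /= !inE !negb_or nyz !andbT.
  have h1 : nx x != prev H x.
    apply/negP=> /eqP E; move: (nnx x); rewrite {1}E /nx /= (next_prev UH) eqxx //.
  have h2 : nx x != y by apply/eqP=> E; apply: ny; rewrite E.
  have h3 : nx x != z by apply/eqP=> E; apply: nz; rewrite E.
  have h4 : prev H x != y by rewrite eq_sym npx; apply/eqP.
  have h5 : prev H x != z by rewrite eq_sym npx; apply/eqP.
  by rewrite h1 h2 h3 h4 h5.
have sub : [:: nx x; prev H x; y; z] \subset S.
  by apply/subsetP => w; rewrite !inE => /or4P [] /eqP ->.
have := subset_leq_card sub.
rewrite (card_uniqP U) /= => le4.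
by move: (leq_trans le4 (deg3 x)).
Qed.

End Ham.


Ltac nlia :=
  intros; repeat match goal with
  | H : is_true (_ <= _) |- _ => apply (elimT leP) in H
  | H : is_true (_ < _) |- _ => apply (elimT ltP) in H
  | H : is_true (_ == _) |- _ => apply (elimT eqP) in H
  | H : is_true (~~ (_ == _)) |- _ => revert H; move/eqP; intro H
  end;
  match goal with
  | |- is_true (_ <= _) => apply/leP
  | |- is_true (_ < _) => apply/ltP
  | |- is_true (_ == _) => apply/eqP
  | |- is_true (~~ (_ == _)) => apply/eqP
  | _ => idtac
  end;
  try unfold addn, subn, muln in *; lia.

Section RR.
Variables (T : finType) (x0 : T) (S : seq T).
Hypothesis US : uniq S.
Hypothesis S0 : 0 < size S.
Let L := size S.
Definition rr (i : nat) := nth x0 S (i %% size S).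

Lemma rr_in i : rr i \in S.
Proof. by rewrite /rr mem_nth // ltn_pmod. Qed.

Lemma rr_mod i : rr (i %% L) = rr i.
Proof. by rewrite /rr modn_mod. Qed.

Lemma rr_inj i j : rr i = rr j -> i %% L = j %% L.
Proof. by move/eqP; rewrite /rr nth_uniq ?ltn_pmod // => /eqP. Qed.

Lemma rr_idx x : x \in S -> rr (index x S) = x.
Proof. by move=> xS; rewrite /rr modn_small ?index_mem // nth_index. Qed.

Lemma rr_index i : index (rr i) S = i %% L.
Proof. by rewrite /rr index_uniq // ltn_pmod. Qed.

Lemma rr_next i : next S (rr i) = rr i.+1.
Proof.
have := index_next US (rr_in i); rewrite rr_index => E.
have nin : next S (rr i) \in S by rewrite mem_next rr_in.
rewrite -(nth_index x0 nin) E.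
by rewrite /rr -addn1 modnDml addn1.
Qed.

Lemma cyc_rr i j : cyc_adj S (rr i) (rr j) = (rr i.+1 == rr j) || (rr j.+1 == rr i).
Proof. by rewrite /cyc_adj !rr_in !rr_next. Qed.

Lemma rr_eq i j : (rr i == rr j) = (i == j %[mod L]).
Proof. by apply/eqP/eqP => [/rr_inj|E] //; rewrite -rr_mod E rr_mod. Qed.

End RR.


Section Main.
Variables (T : finType) (e e0 m : rel T) (A B : seq T) (u v : T).
Hypothesis Hps : perm_structure e0 m A B.
Hypothesis Huv : u = v \/ m u v.
Definition Dl (x y : T) := ((x == u) && (y == v)) || ((x == v) && (y == u)).
Hypothesis He : forall x y, e x y = e0 x y && ~~ Dl x y.
Hypothesis Hog : odd_girth e (#|T| %/ 2).

Definition L := size A.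

Lemma e0sym : symmetric e0. Proof. by case: Hps => [[]]. Qed.
Lemma e0irr : irreflexive e0. Proof. by case: Hps => [[]]. Qed.
Lemma e0cub : cubic e0. Proof. by case: Hps. Qed.
Lemma msym : symmetric m. Proof. by case: Hps => _ _ []. Qed.
Lemma msub x y : m x y -> e0 x y. Proof. by case: Hps => _ _ [_ H _] _; apply: H. Qed.
Lemma mcard x : #|[set y | m x y]| = 1. Proof. by case: Hps => _ _ []. Qed.
Lemma UA : uniq A. Proof. by case: Hps => _ _ _ [[]]. Qed.
Lemma UB : uniq B. Proof. by case: Hps => _ _ _ [[]]. Qed.
Lemma L3 : 3 <= L. Proof. by case: Hps => _ _ _ [[]]. Qed.
Lemma szA : size A = #|T| %/ 2. Proof. by case: Hps => _ _ _ [[]]. Qed.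
Lemma szB : size B = L. Proof. by case: Hps => _ _ _ [[]] _ _ _ hA hB _; rewrite /L hA hB. Qed.
Lemma partAB x : (x \in A) != (x \in B). Proof. by case: Hps => _ _ _ [_ []]. Qed.
Lemma adjAB x y : (e0 x y && ~~ m x y) = cyc_adj A x y || cyc_adj B x y.
Proof. by case: Hps => _ _ _ [_ []]. Qed.

Lemma L0 : 0 < L. Proof. by apply: leq_trans L3. Qed.
Lemma L0' : 0 < size A. Proof. exact: L0. Qed.
Lemma szB0 : 0 < size B. Proof. by rewrite szB L0. Qed.

Lemma notAB x : x \in A -> x \in B = false.
Proof. by move=> xA; move: (partAB x); rewrite xA; case: (x \in B). Qed.
Lemma notBA x : x \in B -> x \in A = false.
Proof. by move=> xB; move: (partAB x); rewrite xB; case: (x \in A). Qed.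

Lemma cardT : #|T| = L + L.
Proof.
have sB := szB; rewrite /L in sB *; rewrite -{2}sB -(card_uniqP UA) -(card_uniqP UB) -cardUI.
have -> : #|[predI A & B]| = 0.
  apply: eq_card0 => x; rewrite !inE; case xA: (x \in A) => //=.
  by rewrite notAB.
rewrite addn0; apply: eq_card => x; rewrite !inE.
by move: (partAB x); case: (x \in A); case: (x \in B).
Qed.

Lemma LE : #|T| %/ 2 = L.
Proof. by rewrite cardT addnn -muln2 mulnK. Qed.

Lemma Lodd : odd L.
Proof. by case: Hog => [[c [_ [oc]]]]; rewrite LE => <-. Qed.

Lemma girth c : is_cycle_of e c -> odd (size c) -> L <= size c.
Proof. by case: Hog => _ H; rewrite -LE; apply: H. Qed.

Lemma e0E x y : e0 x y = [|| cyc_adj A x y, cyc_adj B x y | m x y].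
Proof.
have := adjAB x y; case mxy: (m x y).
  by rewrite (msub mxy) !orbT.
by rewrite andbT orbF => ->.
Qed.

Lemma m_nadj x y : m x y -> (cyc_adj A x y || cyc_adj B x y) = false.
Proof. by move=> mxy; rewrite -adjAB mxy andbF. Qed.

Lemma Dsym x y : Dl x y = Dl y x.
Proof. by rewrite /Dl orbC andbC [(y == v) && _]andbC. Qed.

Lemma e_sym : symmetric e.
Proof. by move=> x y; rewrite !He e0sym Dsym. Qed.

Lemma e_sub x y : e x y -> e0 x y.
Proof. by rewrite He => /andP []. Qed.

Lemma deg3 x : #|[set y | e x y]| <= 3.
Proof.
rewrite -(e0cub x); apply: subset_leq_card; apply/subsetP => y.
by rewrite !inE; apply: e_sub.
Qed.

Lemma mirr x : m x x = false.
Proof. by apply/negP => /msub; rewrite e0irr. Qed.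

Lemma D_m x y : Dl x y -> u <> v -> m x y.
Proof.
move=> Dxy nuv; case: Huv => // muv.
by case/orP: Dxy => /andP [/eqP -> /eqP ->] //; rewrite msym.
Qed.

Lemma D_eq x y : Dl x y -> u = v -> x = u /\ y = u.
Proof. by move=> Dxy euv; case/orP: Dxy => /andP [/eqP -> /eqP ->]; rewrite euv. Qed.

Lemma e_cyc x y : cyc_adj A x y || cyc_adj B x y -> e x y.
Proof.
move=> cxy; have e0xy : e0 x y by rewrite e0E orbA cxy.
rewrite He e0xy /=; apply/negP => Dxy.
have [euv|nuv] := eqVneq u v.
  by case: (D_eq Dxy euv) => ex ey; move: e0xy; rewrite ex ey e0irr.
by move: (m_nadj (D_m Dxy (elimN eqP nuv))); rewrite cxy.
Qed.

Definition p x := odflt x [pick y | m x y].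

Lemma mp x : m x (p x).
Proof.
rewrite /p; case: pickP => [y //|none].
by move: (mcard x); rewrite (_ : [set y | m x y] = set0) ?cards0 //; apply/setP => y; rewrite !inE none.
Qed.

Lemma m_p x y : m x y -> y = p x.
Proof.
move=> mxy; have /cards1P [z Z] : #|[set y | m x y]| == 1 by rewrite mcard.
have h1 : y \in [set y | m x y] by rewrite inE.
have h2 : p x \in [set y | m x y] by rewrite inE mp.
by move: h1 h2; rewrite Z !inE => /eqP -> /eqP ->.
Qed.

Lemma pp x : p (p x) = x.
Proof. by apply/esym/m_p; rewrite msym mp. Qed.

Lemma p_inj : injective p.
Proof. exact: (can_inj pp). Qed.

Lemma p_neq x : p x != x.
Proof. by apply/eqP=> E; move: (mp x); rewrite E mirr. Qed.

Lemma e_p x : e x (p x) = ~~ Dl x (p x).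
Proof. by rewrite He (msub (mp x)). Qed.


Definition ringf (f : nat -> T) :=
  [/\ forall k, f (k %% L) = f k,
      forall i j, f i = f j -> i %% L = j %% L &
      forall k, e (f k) (f k.+1)].

Lemma ring_add f k : ringf f -> f (k + L) = f k.
Proof. by case=> h _ _; rewrite -h modnDr h. Qed.

Lemma ring_shift f x y n : ringf f -> f x = f y -> f (x + n) = f (y + n).
Proof.
case=> h hi _ E; rewrite -h -[f (y + n)]h; congr f.
by rewrite -modnDml (hi _ _ E) modnDml.
Qed.

Definition rev_ring (f : nat -> T) c k := f (c + (L - k %% L)).

Lemma rev_ring0 f c : ringf f -> rev_ring f c 0 = f c.
Proof. by move=> rf; rewrite /rev_ring mod0n subn0 ring_add. Qed.



Lemma ring_rev f c : ringf f -> ringf (rev_ring f c).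
Proof.
move=> rf; have [h hi he] := rf; split.
- by move=> k; rewrite /rev_ring modn_mod.
- move=> i j /hi; rewrite /rev_ring => /eqP; rewrite eqn_modDl => /eqP E.
  have li := ltn_pmod i L0; have lj := ltn_pmod j L0.
  move: li lj E; set I := i %% L; set J := j %% L => li lj E.
  have [zi|nzi] := eqVneq I 0; have [zj|nzj] := eqVneq J 0.
  + by rewrite zi zj.
  + move: E; rewrite zi subn0 modnn modn_small; first by nlia.
    by nlia.
  + move: E; rewrite zj subn0 modnn modn_small; first by nlia.
    by nlia.
  + move: E; rewrite !modn_small; nlia.
- move=> k; rewrite /rev_ring.
  have lk := ltn_pmod k L0.
  have [lt|ge] := ltnP (k %% L).+1 L.
    have -> : k.+1 %% L = (k %% L).+1 by rewrite -addn1 -modnDml addn1 modn_small.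
    have -> : c + (L - k %% L) = (c + (L - (k %% L).+1)).+1 by nlia.
    by rewrite e_sym.
  have E : (k %% L).+1 = L by nlia.
  have -> : k.+1 %% L = 0 by rewrite -addn1 -modnDml addn1 E modnn.
  rewrite subn0 (ring_add c rf).
  have -> : c + (L - k %% L) = c.+1 by nlia.
  by rewrite e_sym.
Qed.

Definition arc (f : nat -> T) i r := [seq f (i + j) | j <- iota 0 r].

Lemma size_arc f i r : size (arc f i r) = r.
Proof. by rewrite /arc size_map size_iota. Qed.

Lemma arc_cons f i r : arc f i r.+1 = f i :: arc f i.+1 r.
Proof.
rewrite /arc /= addn0; congr cons.
have -> : iota 1 r = map (addn 1) (iota 0 r) by rewrite -iotaDl.
rewrite -map_comp; apply: eq_map => j /=.
by rewrite add1n addnS addSn.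
Qed.

Lemma arc_uniq f i r : ringf f -> r <= L -> uniq (arc f i r).
Proof.
case=> _ hi _ rL; rewrite /arc map_inj_in_uniq ?iota_uniq //.
move=> j j'; rewrite !mem_iota !add0n => /andP[_ lj] /andP[_ lj'] /hi /eqP; rewrite eqn_modDl.
by rewrite !modn_small; [move/eqP | nlia | nlia].
Qed.

Lemma arc_path f i r : ringf f -> path e (f i) (arc f i.+1 r).
Proof.
case=> _ _ he; elim: r i => [//|r IH] i.
by rewrite arc_cons /= he IH.
Qed.

Lemma arc_last f i r : last (f i) (arc f i.+1 r) = f (i + r).
Proof.
elim: r i => [|r IH] i; first by rewrite addn0.
by rewrite arc_cons /= IH addSnnS.
Qed.

Lemma arc_mem f i r (P : pred T) : (forall k, P (f k)) -> forall x, x \in arc f i r -> P x.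
Proof. by move=> hP x /mapP [j _ ->]. Qed.

Lemma cyc1 f i r : ringf f -> 3 <= r <= L -> e (f (i + r.-1)) (f i) ->
  is_cycle_of e (arc f i r).
Proof.
move=> rf /andP [r3 rL] ecl; rewrite /is_cycle_of arc_uniq // size_arc r3 /=.
case: r r3 rL ecl => [//|r] _ _ ecl.
by rewrite arc_cons /= rcons_path arc_path // arc_last.
Qed.

Lemma cyc2 f g i j r q : ringf f -> ringf g ->
  (forall k, f k \in A) -> (forall k, g k \in B) ->
  0 < r <= L -> 0 < q <= L -> 3 <= r + q ->
  e (f (i + r.-1)) (g j) -> e (g (j + q.-1)) (f i) ->
  is_cycle_of e (arc f i r ++ arc g j q).
Proof.
move=> rf rg fA gB /andP [r0 rL] /andP [q0 qL] rq e1 e2.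
rewrite /is_cycle_of size_cat !size_arc rq cat_uniq !arc_uniq //= andbT.
apply/andP; split.
  apply/hasPn => x xg; apply/negP => xf.
  have xA : x \in A := arc_mem (P := fun y => y \in A) fA xf.
  have xB : x \in B := arc_mem (P := fun y => y \in B) gB xg.
  by move: (notAB xA); rewrite xB.
case: r r0 rL e1 rq => [//|r] _ _ e1 _; case: q q0 qL e2 => [//|q] _ _ e2.
rewrite !arc_cons /= rcons_cat /= cat_path arc_path //= -/(arc f i.+1 r).
rewrite arc_last e1 /= rcons_path arc_path // arc_last.
by rewrite e2.
Qed.

Definition a := rr u A.
Definition b := rr u B.

Lemma a_in k : a k \in A. Proof. exact (rr_in u L0' k). Qed.
Lemma b_in k : b k \in B. Proof. exact (rr_in u szB0 k). Qed.
Lemma a_notB k : a k \in B = false. Proof. exact: notAB (a_in k). Qed.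
Lemma b_notA k : b k \in A = false. Proof. exact: notBA (b_in k). Qed.

Lemma a_idx x : x \in A -> a (index x A) = x. Proof. exact (fun h => rr_idx u h). Qed.
Lemma b_idx x : x \in B -> b (index x B) = x. Proof. exact (fun h => rr_idx u h). Qed.

Lemma a_eq i j : (a i == a j) = (i == j %[mod L]).
Proof. by rewrite /a (rr_eq u UA L0'). Qed.
Lemma b_eq i j : (b i == b j) = (i == j %[mod L]).
Proof. by rewrite /b (rr_eq u UB szB0) szB. Qed.

Lemma ring_a : ringf a.
Proof.
split.
- by move=> k; rewrite /a /L rr_mod.
- by move=> i j E; apply/eqP; rewrite -a_eq E.
- by move=> k; apply: e_cyc; rewrite /a (cyc_rr u UA L0') eqxx.
Qed.

Lemma ring_b : ringf b.
Proof.
split.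
- by move=> k; rewrite /b -szB rr_mod.
- by move=> i j E; apply/eqP; rewrite -b_eq E.
- by move=> k; apply: e_cyc; rewrite /b (cyc_rr u UB szB0) eqxx orbT.
Qed.

Lemma nm_a k : ~~ m (a k) (a k.+1).
Proof.
by apply/negP => /m_nadj; rewrite /a (cyc_rr u UA L0') eqxx.
Qed.

Lemma nm_b k : ~~ m (b k) (b k.+1).
Proof.
by apply/negP => /m_nadj; rewrite /b (cyc_rr u UB szB0) eqxx orbT.
Qed.

Lemma chord_aux f i j : ringf f -> (forall k, ~~ m (f k) (f k.+1)) ->
  i < j -> j < L -> m (f i) (f j) -> e (f i) (f j) -> False.
Proof.
move=> rf nm lij ljL mij eij.
have [fm fi fe] := rf.
have LO := Lodd.
have L3' := L3.
have [ej|nej] := eqVneq j i.+1.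
  by move: (nm i); rewrite -ej mij.
have [el|nel] := eqVneq (j - i) L.-1.
  have i0 : i = 0 by nlia.
  have jL : j.+1 = i + L by nlia.
  by move: (nm j); rewrite jL ring_add // msym mij.
have t2 : 2 <= j - i by nlia.
have tL : j - i <= L - 2 by nlia.
case ot: (odd (j - i)).
  have C := @cyc1 f j (L - (j - i)).+1 rf.
  have h3 : 3 <= (L - (j - i)).+1 <= L by apply/andP; split; nlia.
  have ecl : e (f (j + (L - (j - i)).+1.-1)) (f j).
    have -> : j + (L - (j - i)).+1.-1 = i + L by nlia.
    by rewrite ring_add // e_sym.
  have := girth (C h3 ecl); rewrite size_arc /= oddB ?ot ?LO //; last by nlia.
  move=> /(_ isT) H. nlia.
have C := @cyc1 f i (j - i).+1 rf.
have h3 : 3 <= (j - i).+1 <= L by apply/andP; split; nlia.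
have ecl : e (f (i + (j - i).+1.-1)) (f i).
  by rewrite /= subnKC; [rewrite e_sym | exact: ltnW].
have := girth (C h3 ecl); rewrite size_arc /= ot.
move=> /(_ isT) H. nlia.
Qed.

Lemma chord f i j : ringf f -> (forall k, ~~ m (f k) (f k.+1)) ->
  m (f i) (f j) -> Dl (f i) (f j).
Proof.
move=> rf nm mij; apply/negPn/negP => nD.
have eij : e (f i) (f j) by rewrite He (msub mij) nD.
have [fm fi fe] := rf.
rewrite -fm -[f j]fm in mij eij.
have li := ltn_pmod i L0; have lj := ltn_pmod j L0.
have [lt|gt|eq] := ltngtP (i %% L) (j %% L).
- exact: chord_aux rf nm lt lj mij eij.
- by apply: (chord_aux rf nm gt li); rewrite 1?msym 1?e_sym.
- by move: mij; rewrite eq mirr.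
Qed.

Lemma chordA x y : x \in A -> y \in A -> m x y -> Dl x y.
Proof.
move=> xA yA; rewrite -(a_idx xA) -(a_idx yA).
exact (chord ring_a nm_a).
Qed.

Lemma chordB x y : x \in B -> y \in B -> m x y -> Dl x y.
Proof.
move=> xB yB; rewrite -(b_idx xB) -(b_idx yB).
exact (chord ring_b nm_b).
Qed.

Lemma count_uv (X Y : seq T) : uniq X -> uniq Y -> size Y = size X ->
  (forall x, x \in X -> x \in Y = false) -> (forall x, (x \in X) || (x \in Y)) ->
  (forall y y', y \in Y -> y' \in Y -> m y y' -> Dl y y') ->
  u \in X -> v \in X -> m u v -> False.
Proof.
move=> UX UY sz dis cov chY uX vX muv.
have pu : p u = v by rewrite -(m_p muv).
have pv : p v = u by rewrite -(m_p (etrans (msym v u) muv)).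
have pY : forall y, y \in Y -> [&& p y \in X, p y != u & p y != v].
  move=> y yY.
  have pyX : p y \in X.
    case/orP: (cov (p y)) => // pyY.
    case/orP: (chY _ _ yY pyY (mp y)) => /andP [/eqP ey _].
      by move: (dis _ uX); rewrite -ey yY.
    by move: (dis _ vX); rewrite -ey yY.
  rewrite pyX /=; apply/andP; split; apply/eqP => E.
    by move: (dis _ vX); rewrite -pu -E pp yY.
  by move: (dis _ uX); rewrite -pv -E pp yY.
have U : uniq (u :: v :: map p Y).
  rewrite /= (map_inj_uniq p_inj) UY andbT !inE negb_or.
  have -> : u != v by apply/eqP => E; move: muv; rewrite E mirr.
  apply/andP; split; apply/negP => /mapP [y yY E]; move: (pY y yY);
    by rewrite -E eqxx ?andbF.
have S : {subset u :: v :: map p Y <= X}.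
  move=> x; rewrite !inE => /or3P [/eqP ->|/eqP ->|/mapP [y yY ->]] //.
  by case/and3P: (pY y yY).
have := uniq_leq_size U S; rewrite /= size_map sz.
by rewrite ltnNge leqnSn.
Qed.

Lemma covAB x : (x \in A) || (x \in B).
Proof. by move: (partAB x); case: (x \in A); case: (x \in B). Qed.

Lemma pA x : x \in A -> p x \in B.
Proof.
move=> xA; case pB: (p x \in B) => //.
have pxA : p x \in A by move: (covAB (p x)); rewrite pB orbF.
have D := chordA xA pxA (mp x).
case: Huv => [euv|muv].
  case: (D_eq D euv) => ex epx.
  by move: (p_neq x); rewrite epx ex eqxx.
have [uA vA] : u \in A /\ v \in A.
  by case/orP: D => /andP [/eqP <- /eqP <-].
exfalso; apply: (count_uv UA UB szB notAB covAB chordB uA vA muv).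
Qed.

Lemma pB x : x \in B -> p x \in A.
Proof.
move=> xB; case pA': (p x \in A) => //.
have pxB : p x \in B by move: (covAB (p x)); rewrite pA'.
have D := chordB xB pxB (mp x).
case: Huv => [euv|muv].
  case: (D_eq D euv) => ex epx.
  by move: (p_neq x); rewrite epx ex eqxx.
have [uB vB] : u \in B /\ v \in B.
  by case/orP: D => /andP [/eqP <- /eqP <-].
have covBA : forall x, (x \in B) || (x \in A) by move=> y; rewrite orbC covAB.
exfalso; apply: (count_uv UB UA (Logic.eq_sym szB) notBA covBA chordA uB vB muv).
Qed.


Lemma revj f c j : j < L -> rev_ring f c j = f (c + (L - j)).
Proof. by move=> jL; rewrite /rev_ring modn_small. Qed.

Lemma no_mod i j : 0 < j < L -> (i + j == i %[mod L]) = false.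
Proof.
move=> /andP [j0 jL]; rewrite -{2}[i]addn0 eqn_modDl mod0n modn_small //.
by apply/negbTE; rewrite -lt0n.
Qed.

Definition s i := index (p (a i)) B.

Lemma bs i : b (s i) = p (a i).
Proof. exact: b_idx (pA (a_in i)). Qed.

Lemma s_lt i : s i < L.
Proof. by rewrite /s -szB index_mem pA ?a_in. Qed.

Lemma bs_inj i j : b (s i) = b (s j) -> i = j %[mod L].
Proof. by rewrite !bs => /p_inj /eqP; rewrite a_eq => /eqP. Qed.

Definition present i := ~~ Dl (a i) (p (a i)).

Lemma e_ab i : present i -> e (a i) (b (s i)).
Proof. by rewrite bs e_p. Qed.

Lemma e_ba i : present i -> e (b (s i)) (a i).
Proof. by move=> h; rewrite e_sym e_ab. Qed.

Lemma a_mod k : a (k %% L) = a k. Proof. by case: ring_a. Qed.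

Definition kk := (if u \in A then index u A else index v A) %% L.

Lemma kk_lt : kk < L. Proof. exact: ltn_pmod _ L0. Qed.

Lemma a_index i : index (a i) A = i %% L.
Proof. by rewrite /a (rr_index u UA L0'). Qed.

Lemma present_k i : i %% L != kk -> present i.
Proof.
move=> ik; apply/negP => D.
case: Huv => [euv|muv].
  case: (D_eq D euv) => ex epx.
  by move: (p_neq (a i)); rewrite epx ex eqxx.
case/orP: D => /andP [/eqP ex /eqP epx].
  move: ik; rewrite /kk -ex a_in a_index modn_mod eqxx //.
have vA : v \in A by rewrite -ex a_in.
have uB : u \in B by rewrite -epx; apply: pA; exact: a_in.
move: ik; rewrite /kk (notBA uB) -ex a_index modn_mod eqxx //.
Qed.

Lemma kk_near : m u v ->
  (a kk = u /\ p (a kk) = v) \/ (a kk = v /\ p (a kk) = u).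
Proof.
move=> muv; have pu : p u = v by rewrite -(m_p muv).
have pv : p v = u by rewrite -(m_p (etrans (msym v u) muv)).
rewrite /kk; case uA: (u \in A).
  by left; rewrite a_mod (a_idx uA) pu.
have uB : u \in B by move: (covAB u); rewrite uA.
have vA : v \in A by rewrite -pu pB.
by right; rewrite a_mod (a_idx vA) pv.
Qed.

Definition dd i := (s i.+1 + (L - s i)) %% L.

Lemma dd_lt i : dd i < L. Proof. exact: ltn_pmod _ L0. Qed.

Lemma b_dd i : b (s i + dd i) = b (s i.+1).
Proof.
apply/eqP; rewrite b_eq /dd modnDmr.
have := s_lt i => h.
have -> : s i + (s i.+1 + (L - s i)) = s i.+1 + L by nlia.
by rewrite modnDr.
Qed.

Lemma dd_neq0 i : dd i != 0.
Proof.
apply/eqP => E; have := b_dd i; rewrite E addn0 => /bs_inj /eqP.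
rewrite -addn1 eq_sym no_mod //; apply/andP; split => //.
by apply: leq_trans L3.
Qed.

Lemma b_dd2 i : b (s i + dd i + dd i.+1) = b (s i.+2).
Proof. by rewrite (ring_shift _ ring_b (b_dd i)) b_dd. Qed.

Lemma K1 i : present i -> present i.+1 ->
  (odd (dd i) -> dd i <= 3) /\ (~~ odd (dd i) -> L <= (dd i).+3).
Proof.
move=> pi pi1.
have dL := dd_lt i; have d0 := dd_neq0 i; have LO := Lodd; have L3' := L3.
split => od.
  have C := @cyc2 a b i (s i.+1) 2 (L - dd i).+1 ring_a ring_b a_in b_in.
  have C' : is_cycle_of e (arc a i 2 ++ arc b (s i.+1) (L - dd i).+1).
    apply: C.
    - by apply/andP; split; nlia.
    - by apply/andP; split; nlia.
    - by nlia.
    - by rewrite addn1 e_ab.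
    - rewrite /= -(ring_shift _ ring_b (b_dd i)) -addnA subnKC.
        by rewrite (ring_add _ ring_b) e_ba.
      exact: ltnW.
  have := girth C'; rewrite size_cat !size_arc /= oddB ?LO ?od //; last by nlia.
  by move=> /(_ isT); nlia.
have C := @cyc2 (rev_ring a i.+1) b 0 (s i) 2 (dd i).+1 (ring_rev i.+1 ring_a) ring_b
   (fun k => a_in _) b_in.
have C' : is_cycle_of e (arc (rev_ring a i.+1) 0 2 ++ arc b (s i) (dd i).+1).
  apply: C.
  - by apply/andP; split; nlia.
  - by apply/andP; split; nlia.
  - by nlia.
  - rewrite revj; last by nlia.
    have -> : 0 + 1 = 1 by [].
    have -> : i.+1 + (L - 1) = i + L by nlia.
    by rewrite (ring_add _ ring_a) e_ab.
  - by rewrite /= b_dd (rev_ring0 _ ring_a) e_ba.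
have := girth C'; rewrite size_cat !size_arc /= od.
by move=> /(_ isT); nlia.
Qed.

Lemma all_in (H : seq T) : uniq H -> size H = #|T| -> forall x, x \in H.
Proof.
move=> UH sH x; apply/negPn/negP => xH.
have U : uniq (x :: H) by rewrite /= xH UH.
have := max_card (mem (x :: H)); rewrite (card_uniqP U) /= sH.
by rewrite ltnn.
Qed.

Lemma from_ham (H : seq T) : is_cycle_of e H -> size H = L + L -> three_edge_colourable e.
Proof.
case/and3P => UH s3 cH sH.
have allH : forall x, x \in H by apply: all_in => //; rewrite sH cardT.
have ev : ~~ odd (size H) by rewrite sH addnn odd_double.
exact: (@ham_colour _ e e_sym deg3 H UH allH cH ev s3).
Qed.

Lemma Hcol i : present i -> present i.+1 -> (dd i == 1) || (dd i == L.-1) ->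
  three_edge_colourable e.
Proof.
move=> pi pi1 /orP [/eqP d1|/eqP dL]; have L3' := L3.
  have C := @cyc2 a (rev_ring b (s i)) i.+1 0 L L ring_a (ring_rev (s i) ring_b)
     a_in (fun k => b_in _).
  apply: (@from_ham (arc a i.+1 L ++ arc (rev_ring b (s i)) 0 L)); last first.
    by rewrite size_cat !size_arc.
  apply: C.
  - by apply/andP; split; nlia.
  - by apply/andP; split; nlia.
  - by nlia.
  - have -> : i.+1 + L.-1 = i + L by nlia.
    by rewrite (ring_add _ ring_a) (rev_ring0 _ ring_b) e_ab.
  - rewrite revj; last by nlia.
    have -> : s i + (L - (0 + L.-1)) = s i + dd i by nlia.
    by rewrite b_dd e_ba.
have C := @cyc2 a b i.+1 (s i) L L ring_a ring_b a_in b_in.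
apply: (@from_ham (arc a i.+1 L ++ arc b (s i) L)); last first.
  by rewrite size_cat !size_arc.
apply: C.
- by apply/andP; split; nlia.
- by apply/andP; split; nlia.
- by nlia.
- have -> : i.+1 + L.-1 = i + L by nlia.
  by rewrite (ring_add _ ring_a) e_ab.
- by rewrite -dL b_dd e_ba.
Qed.

Lemma mix_sum i : dd i + dd i.+1 != L.
Proof.
apply/eqP => E; have := b_dd2 i; rewrite -addnA E (ring_add _ ring_b).
move=> /bs_inj /eqP; rewrite -addn2 eq_sym no_mod //.
by rewrite /= L3.
Qed.

Lemma K2 i : 7 <= L -> present i -> present i.+1 -> present i.+2 ->
  ((dd i == 3) && (dd i.+1 == 3)) || ((dd i == L - 3) && (dd i.+1 == L - 3)) -> False.
Proof.
move=> L7 pi pi1 pi2 /orP [/andP [/eqP d1 /eqP d2]|/andP [/eqP d1 /eqP d2]];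
  have LO := Lodd.
  have C := @cyc2 a b i (s i.+2) 3 (L - 5) ring_a ring_b a_in b_in.
  have C' : is_cycle_of e (arc a i 3 ++ arc b (s i.+2) (L - 5)).
    apply: C.
    - by apply/andP; split; nlia.
    - by apply/andP; split; nlia.
    - by nlia.
    - by rewrite addn2 e_ab.
    - have E := b_dd2 i; rewrite d1 d2 in E.
      rewrite -(ring_shift _ ring_b E).
      have -> : s i + 3 + 3 + (L - 5).-1 = s i + L by nlia.
      by rewrite (ring_add _ ring_b) e_ba.
  have := girth C'; rewrite size_cat !size_arc oddD oddB ?LO //; last by nlia.
  by move=> /(_ isT); nlia.
have C := @cyc2 (rev_ring a i.+2) b 0 (s i) 3 (L - 5) (ring_rev i.+2 ring_a) ring_b
   (fun k => a_in _) b_in.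
have C' : is_cycle_of e (arc (rev_ring a i.+2) 0 3 ++ arc b (s i) (L - 5)).
  apply: C.
  - by apply/andP; split; nlia.
  - by apply/andP; split; nlia.
  - by nlia.
  - rewrite revj; last by nlia.
    have -> : i.+2 + (L - (0 + 3).-1) = i + L by nlia.
    by rewrite (ring_add _ ring_a) e_ab.
  - rewrite (rev_ring0 _ ring_a).
    have E := b_dd2 i; rewrite d1 d2 in E.
    rewrite /= -(ring_add (s i + (L - 5).-1) ring_b).
    have -> : s i + (L - 5).-1 + L = s i + (L - 3) + (L - 3) by nlia.
    by rewrite E e_ba.
have := girth C'; rewrite size_cat !size_arc oddD oddB ?LO //; last by nlia.
by move=> /(_ isT); nlia.
Qed.

Lemma fin5 c x d : c < 5 -> x < 5 -> (d == 2) || (d == 3) ->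
  x != c %% 5 -> x != (c + d) %% 5 -> x != (c + 2 * d) %% 5 ->
  x != (c + 3 * d) %% 5 -> x = (c + 4 * d) %% 5.
Proof.
move=> hc hx hd.
case: c hc => [|[|[|[|[|c]]]]] hc //; case: x hx => [|[|[|[|[|x]]]]] hx //;
  by case/orP: hd => /eqP ->.
Qed.

Lemma e0_aa x y : e0 (a x) (a y) = (a x.+1 == a y) || (a y.+1 == a x).
Proof.
rewrite e0E {2}/cyc_adj a_notB /=.
have -> : m (a x) (a y) = false.
  by apply/negP => /m_p E; move: (pA (a_in x)); rewrite -E a_notB.
by rewrite orbF /a (cyc_rr u UA L0').
Qed.

Lemma e0_bb x y : e0 (b x) (b y) = (b x.+1 == b y) || (b y.+1 == b x).
Proof.
rewrite e0E {1}/cyc_adj b_notA /=.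
have -> : m (b x) (b y) = false.
  by apply/negP => /m_p E; move: (pB (b_in x)); rewrite -E b_notA.
by rewrite orbF /b (cyc_rr u UB szB0).
Qed.

Lemma e0_ab x y : e0 (a x) (b y) = (b y == p (a x)).
Proof.
rewrite e0E {1}/cyc_adj {1}/cyc_adj b_notA a_notB /= !andbF /=.
apply/idP/eqP => [/m_p //|->]; exact: mp.
Qed.

Section NC.
Hypothesis Hnc : ~ three_edge_colourable e.

Lemma dd3 i : present i -> present i.+1 -> dd i = 3 \/ dd i = L - 3.
Proof.
move=> pi pi1.
have dL := dd_lt i; have d0 := dd_neq0 i; have LO := Lodd; have L3' := L3.
have n1 : dd i != 1 by apply/negP => h; apply: Hnc; apply: (Hcol pi pi1); rewrite h.
have nL : dd i != L.-1 by apply/negP => h; apply: Hnc; apply: (Hcol pi pi1); rewrite h orbT.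
have [K1o K1e] := K1 pi pi1.
case od: (odd (dd i)).
  have := K1o od => d3.
  have : dd i = 2 \/ dd i = 3 by nlia.
  by case=> E; [move: od; rewrite E | left].
have := K1e (negbT od) => d3.
have : dd i = L - 2 \/ dd i = L - 3 by nlia.
case=> E; last by right.
by move: od; rewrite E oddB ?LO //; nlia.
Qed.

Lemma pres_j j : 0 < j < L -> present (kk + j).
Proof.
move=> hj; apply: present_k; rewrite -{2}(modn_small kk_lt).
by rewrite (no_mod _ hj).
Qed.

Lemma L5 : L = 5.
Proof.
have LO := Lodd; have L3' := L3.
have p1 : present kk.+1 by rewrite -addn1; apply: pres_j; apply/andP; split; nlia.
have [E3|[E5|L7]] : L = 3 \/ L = 5 \/ 7 <= L.
- case: (ltnP L 7) => [lt7|ge7]; last by right; right.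
  have : L = 3 \/ L = 4 \/ L = 5 \/ L = 6 by nlia.
  case=> [|[E|[|E]]]; auto; by move: LO; rewrite E.
- have p2 : present kk.+2 by rewrite -addn2; apply: pres_j; apply/andP; split; nlia.
  have := dd_lt kk.+1; have := dd_neq0 kk.+1.
  by case: (dd3 p1 p2) => ->; rewrite E3.
- by [].
have p2 : present kk.+2 by rewrite -addn2; apply: pres_j; apply/andP; split; nlia.
have p3 : present kk.+3 by rewrite -addn3; apply: pres_j; apply/andP; split; nlia.
exfalso; apply: (K2 L7 p1 p2 p3).
have := mix_sum kk.+1.
case: (dd3 p1 p2) => ->; case: (dd3 p2 p3) => -> //; try by rewrite !eqxx ?orbT.
- by rewrite (subnKC L3') eqxx.
- by rewrite (subnK L3') eqxx.
Qed.

Lemma cons_eq i : present i -> present i.+1 -> present i.+2 -> dd i = dd i.+1.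
Proof.
move=> p0 p1 p2; have := mix_sum i; rewrite L5.
by case: (dd3 p0 p1) => ->; case: (dd3 p1 p2) => ->; rewrite ?L5.
Qed.

Definition dl := dd kk.+1.

Lemma presk t : t < 4 -> present (kk.+1 + t).
Proof. by move=> ht; rewrite addSnnS; apply: pres_j; rewrite L5; apply/andP; split; nlia. Qed.

Lemma dl23 : (dl == 2) || (dl == 3).
Proof.
have := presk (isT : 0 < 4); have := presk (isT : 1 < 4); rewrite addn0 addn1 => p1 p0.
by case: (dd3 p0 p1); rewrite /dl => ->; rewrite ?L5.
Qed.

Lemma dd_const t : t <= 2 -> dd (kk.+1 + t) = dl.
Proof.
have P := presk.
have p0 := P 0 isT; have p1 := P 1 isT; have p2 := P 2 isT; have p3 := P 3 isT.
rewrite addn0 in p0; rewrite addn1 in p1.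
have e2 : kk.+1 + 2 = kk.+3 by rewrite addn2.
have e3 : kk.+1 + 3 = kk.+4 by rewrite addn3.
rewrite e2 in p2; rewrite e3 in p3.
have c1 := cons_eq p0 p1 p2; have c2 := cons_eq p1 p2 p3.
case: t => [|[|[|//]]] _; rewrite /dl ?addn0 ?addn1 ?e2 //.
by rewrite c1 c2.
Qed.

Definition sg t := s (kk.+1 + t).
Definition c0 := sg 0.

Lemma sg_step t : t <= 2 -> b (sg t + dl) = b (sg t.+1).
Proof. by move=> ht; rewrite /sg -(dd_const ht) b_dd addnS. Qed.

Lemma sg_val t : t <= 3 -> b (sg t) = b (c0 + t * dl).
Proof.
elim: t => [|t IH] ht; first by rewrite mul0n addn0.
rewrite -sg_step; last by nlia.
rewrite (ring_shift _ ring_b (IH (ltnW ht))).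
by rewrite mulSn addnCA addnC.
Qed.

Lemma b_mod k : b (k %% L) = b k. Proof. by case: ring_b. Qed.

Lemma c0_lt : c0 < 5. Proof. by rewrite -L5 s_lt. Qed.

Lemma sg_neq t : t <= 3 -> sg 4 != (c0 + t * dl) %% 5.
Proof.
move=> ht; apply/negP => /eqP E.
have : b (sg 4) = b (sg t) by rewrite E -L5 b_mod sg_val.
move=> /bs_inj /eqP; rewrite eqn_modDl L5 !modn_small //; last by nlia.
by move=> /eqP; nlia.
Qed.

Lemma sg_all t : t <= 4 -> b (sg t) = b (c0 + t * dl).
Proof.
move=> ht; case: (ltnP t 4) => h; first exact: sg_val.
have -> : t = 4 by nlia.
have x5 : sg 4 < 5 by rewrite -L5 s_lt.
have n0 := sg_neq (isT : 0 <= 3); have n1 := sg_neq (isT : 1 <= 3).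
have n2 := sg_neq (isT : 2 <= 3); have n3 := sg_neq (isT : 3 <= 3).
rewrite mul0n addn0 in n0; rewrite mul1n in n1.
by rewrite (fin5 c0_lt x5 dl23 n0 n1 n2 n3) -L5 b_mod.
Qed.

Definition PF (d : nat) (t t' : nat) : bool :=
  if t < 5 then
    (if t' < 5 then (t.+1 == t' %[mod 5]) || (t'.+1 == t %[mod 5])
     else ((t' - 5) * d == t * d %[mod 5]))
  else if t' < 5 then ((t - 5) * d == t' * d %[mod 5])
  else (((t - 5) * d).+1 == (t' - 5) * d %[mod 5]) || (((t' - 5) * d).+1 == (t - 5) * d %[mod 5]).

Definition hh (t : 'I_10) : T := if t < 5 then a (kk.+1 + t) else b (c0 + (t - 5) * dl).

Lemma hh_e0 t t' : e0 (hh t) (hh t') = PF dl t t'.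
Proof.
have Ht := ltn_ord t; have Ht' := ltn_ord t'.
rewrite /hh /PF; case: ifP => ht; case: ifP => ht'.
- by rewrite e0_aa !a_eq L5 -!addnS !eqn_modDl.
- rewrite e0_ab -bs; have -> : s (kk.+1 + t) = sg t by [].
  by rewrite sg_all ?b_eq ?L5 ?eqn_modDl //; nlia.
- rewrite e0sym e0_ab -bs; have -> : s (kk.+1 + t') = sg t' by [].
  by rewrite sg_all ?b_eq ?L5 ?eqn_modDl //; nlia.
- by rewrite e0_bb !b_eq L5 -!addnS !eqn_modDl.
Qed.

Definition petN (t t' : nat) := ((t,t') \in petersen_edges) || ((t',t) \in petersen_edges).

Lemma pet2 : all (fun t => all (fun t' => petN t t' == PF 2 t t') (iota 0 10)) (iota 0 10).
Proof. by vm_compute. Qed.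
Lemma pet3 : all (fun t => all (fun t' => petN t t' == PF 3 t t') (iota 0 10)) (iota 0 10).
Proof. by vm_compute. Qed.

Lemma pet_PF d : (d == 2) || (d == 3) -> forall t t' : 'I_10, petersen t t' = PF d t t'.
Proof.
move=> hd t t'; have Ht : val t \in iota 0 10 by rewrite mem_iota ltn_ord.
have Ht' : val t' \in iota 0 10 by rewrite mem_iota ltn_ord.
case/orP: hd => /eqP ->.
  by move/allP: pet2 => /(_ _ Ht) /allP /(_ _ Ht') /eqP.
by move/allP: pet3 => /(_ _ Ht) /allP /(_ _ Ht') /eqP.
Qed.

Definition IF (d : nat) (t t' : nat) : bool :=
  if t < 5 then (if t' < 5 then t == t' %[mod 5] else false)
  else if t' < 5 then false else ((t - 5) * d == (t' - 5) * d %[mod 5]).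

Lemma if2 : all (fun t => all (fun t' => IF 2 t t' ==> (t == t')) (iota 0 10)) (iota 0 10).
Proof. by vm_compute. Qed.
Lemma if3 : all (fun t => all (fun t' => IF 3 t t' ==> (t == t')) (iota 0 10)) (iota 0 10).
Proof. by vm_compute. Qed.

Lemma hh_eq t t' : (hh t == hh t') = IF dl t t'.
Proof.
rewrite /hh /IF; case: ifP => ht; case: ifP => ht'.
- by rewrite a_eq L5 eqn_modDl.
- by apply/negbTE/negP => /eqP E; move: (a_in (kk.+1 + t)); rewrite E b_notA.
- by apply/negbTE/negP => /eqP E; move: (a_in (kk.+1 + t')); rewrite -E b_notA.
- by rewrite b_eq L5 eqn_modDl.
Qed.

Lemma hh_inj : injective hh.
Proof.
move=> t t' /eqP; rewrite hh_eq => H; apply/val_inj/eqP.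
have Ht : val t \in iota 0 10 by rewrite mem_iota ltn_ord.
have Ht' : val t' \in iota 0 10 by rewrite mem_iota ltn_ord.
case/orP: dl23 H => /eqP -> H.
  by move/allP: if2 => /(_ _ Ht) /allP /(_ _ Ht') /implyP; apply.
by move/allP: if3 => /(_ _ Ht) /allP /(_ _ Ht') /implyP; apply.
Qed.

Lemma hh_bij : bijective hh.
Proof.
have h : #|T| <= #|'I_10| by rewrite card_ord cardT L5.
exact (inj_card_bij hh_inj h).
Qed.

Lemma hh_e0p t t' : e0 (hh t) (hh t') = petersen t t'.
Proof. by rewrite hh_e0 (pet_PF dl23). Qed.

Definition i4 : 'I_10 := inord 4.
Definition i9 : 'I_10 := inord 9.

Lemma hh4 : hh i4 = a kk.
Proof.
rewrite /hh /i4 inordK //= -[a kk](ring_add _ ring_a) L5.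
by rewrite addSnnS.
Qed.

Lemma hh9 : hh i9 = p (a kk).
Proof.
rewrite /hh /i9 inordK //= -sg_all // /sg bs.
by rewrite -[a kk](ring_add _ ring_a) L5 addSnnS.
Qed.

Lemma sec_iso : exists h : 'I_10 -> T, bijective h /\
   (u = v -> forall t t', e (h t) (h t') = petersen t t') /\
   (m u v -> forall t t', e (h t) (h t') = petersen_minus i4 i9 t t').
Proof.
exists hh; split; first exact: hh_bij.
split.
  move=> euv t t'; rewrite He hh_e0p.
  case D: (Dl (hh t) (hh t')); last by rewrite andbT.
  case: (D_eq D euv) => E1 E2.
  by have := hh_inj (etrans E1 (Logic.eq_sym E2)) => E; rewrite E /petersen /petN orbb; move: (val t') (ltn_ord t'); do 10?case => //.
move=> muv t t'; rewrite He hh_e0p /petersen_minus.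
have -> : Dl (hh t) (hh t') = ((t == i4) && (t' == i9)) || ((t == i9) && (t' == i4)).
  rewrite /Dl -!(inj_eq hh_inj) hh4 hh9.
  case: (kk_near muv) => [[-> ->]|[-> ->]] //.
  by rewrite orbC.
by [].
Qed.

End NC.

End Main.


Lemma iso_of (T : finType) (e : rel T) (f : rel 'I_10) (h : 'I_10 -> T) :
  bijective h -> (forall t t', e (h t) (h t') = f t t') -> graph_iso e f.
Proof.
case=> g hg gh E; exists g; split; first by exists h.
by move=> x y; rewrite -E !gh.
Qed.

Unset Implicit Arguments.

Theorem mainTheorem3 (T : finType) (e : rel T)
  (HG : permutation_graph e \/ near_permutation_graph e)
  (Hog : odd_girth e (#|T| %/ 2))
  (Hnc : ~ three_edge_colourable e) :
  graph_iso e petersen \/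
  exists u v : 'I_10, petersen u v /\ graph_iso e (petersen_minus u v).
Proof.
case: HG => [[m [A [B Hps]]]|[e0 [m [A [B [u [v [Hps muv He]]]]]]]].
  left.
  case: A Hps => [|x0 A'] Hps; first by case: Hps => _ _ _ [[]].
  have He : forall x y, e x y = e x y && ~~ Dl x0 x0 x y.
    move=> x y; case D: (Dl x0 x0 x y); last by rewrite andbT.
    have irr : irreflexive e by case: Hps => [[]].
    by case/orP: D => /andP [/eqP -> /eqP ->]; rewrite irr.
  have [h [bh [H1 _]]] := sec_iso Hps (or_introl (Logic.eq_refl x0)) He Hog Hnc.
  exact: iso_of bh (H1 (Logic.eq_refl _)).
right; exists i4, i9; split; first by rewrite /petersen /i4 /i9 !inordK.
have [h [bh [_ H2]]] := sec_iso Hps (or_intror muv) He Hog Hnc.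
exact: iso_of bh (H2 muv).
Qed.
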